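(* Fix $\lambda_p,\lambda_s\in(0,1)$ and $p_a\in(0,1]$. On the set of $p_q\in(0,1)$ for which $(\lambda_p,\lambda_s)$ is in the stable region, i.e. $\lambda_p<\frac{f_{sd}(1-p_q)\mu_p}{f_{sd}(1-p_q)+p_a f_{ps}(1-f_{pd})}$ and $\lambda_s<p_q f_{sd}(1-\lambda_p/\mu_p)$ with $\mu_p=f_{pd}+p_a f_{ps}(1-f_{pd})$, the average PU delay $D_p$ is monotonically increasing in $p_q$ and the average SU delay $D_s$ is monotonically decreasing in $p_q$.
   Context: Constants $f_{pd},f_{ps},f_{sd}\in(0,1)$ with $f_{pd}<f_{sd}$. Set $a=p_a f_{ps}(1-f_{pd})$, $\mu_p=f_{pd}+a$. $D_p=(N_p+N_{sp})/\lambda_p$ and $D_s=N_s/\lambda_s$, where $N_p=\frac{\lambda_p-\lambda_p^2}{\mu_p-\lambda_p}$, $N_{sp}=\frac{m\lambda_p^2+n\lambda_p}{\alpha\lambda_p^2+\beta\lambda_p+\gamma}$, $N_s=\frac{\lambda_p\lambda_s A+(\lambda_s^2-\lambda_s)B(B+\lambda_p)}{BC}$ with $m=a\big[\frac{(1-p_q)f_{sd}-f_{pd}}{\mu_p}-(1-p_q)f_{sd}-a\big]$, $n=a\mu_p$, $\alpha=(1-p_q)f_{sd}+a$, $\beta=\mu_p[-2(1-p_q)f_{sd}-a]$, $\gamma=(1-p_q)f_{sd}\mu_p^2$, $A=p_q f_{sd}(\mu_p-1)$, $B=\mu_p-\lambda_p$, $C=(\lambda_s-p_q f_{sd})\mu_p+p_q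 f_{sd}\lambda_p$. These are the average packet delays of the PU and SU in a cognitive relaying system where the SU serves its own queue w.p. $p_q$ (relay queue w.p. $1-p_q$) when the PU is idle, and admits undelivered overheard PU packets to its relay queue w.p. $p_a$. *)

(* Defs.v *)
From Stdlib Require Import Reals.
Open Scope R_scope.

Definition a_ (pa fpd fps : R) : R := pa * fps * (1 - fpd).
Definition mu_p (pa fpd fps : R) : R := fpd + a_ pa fpd fps.

Definition Dp (fpd fps fsd pa pq lp : R) : R :=
  let a := a_ pa fpd fps in
  let mu := mu_p pa fpd fps in
  let m := a * (((1 - pq) * fsd - fpd) / mu - (1 - pq) * fsd - a) in
  let n := a * mu in
  let alpha := (1 - pq) * fsd + a in
  let beta := mu * (- 2 * (1 - pq) * fsd - a) in
  let gamma := (1 - pq) * fsd * mu ^ 2 in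
  let Np := (lp - lp ^ 2) / (mu - lp) in
  let Nsp := (m * lp ^ 2 + n * lp) / (alpha * lp ^ 2 + beta * lp + gamma) in
  (Np + Nsp) / lp.

Definition Ds (fpd fps fsd pa pq lp ls : R) : R :=
  let mu := mu_p pa fpd fps in
  let A := pq * fsd * (mu - 1) in
  let B := mu - lp in
  let C := (ls - pq * fsd) * mu + pq * fsd * lp in
  let Ns := (lp * ls * A + (ls ^ 2 - ls) * B * (B + lp)) / (B * C) in
  Ns / ls.

Definition stable (fpd fps fsd pa pq lp ls : R) : Prop :=
  0 < pq < 1 /\
  lp < fsd * (1 - pq) * mu_p pa fpd fps / (fsd * (1 - pq) + a_ pa fpd fps) /\
  ls < pq * fsd * (1 - lp / mu_p pa fpd fps).

(* Main.v *)
Require Import Defs.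
From Stdlib Require Import Reals Lra Psatz.
Open Scope R_scope.

Lemma frac_lt (n1 d1 n2 d2 : R) : 0 < d1 * d2 -> n1 * d2 < n2 * d1 -> n1 / d1 < n2 / d2.
Proof.
  intros H1 H2.
  assert (d1 <> 0) by (intro E; subst; lra).
  assert (d2 <> 0) by (intro E; subst; lra).
  assert (E : n2 / d2 - n1 / d1 = (n2 * d1 - n1 * d2) / (d1 * d2)) by (field; auto).
  assert (0 < (n2 * d1 - n1 * d2) / (d1 * d2)).
  { unfold Rdiv. apply Rmult_lt_0_compat. lra. apply Rinv_0_lt_compat; lra. }
  lra.
Qed.

Lemma div_lt_r (x y z : R) : 0 < z -> x < y -> x / z < y / z.
Proof. intros. unfold Rdiv. apply Rmult_lt_compat_r; [apply Rinv_0_lt_compat|]; lra. Qed.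

Theorem lemma3 (fpd fps fsd lp ls pa : R) :
  0 < fpd < 1 -> 0 < fps < 1 -> 0 < fsd < 1 -> fpd < fsd ->
  0 < lp < 1 -> 0 < ls < 1 -> 0 < pa <= 1 ->
  forall pq1 pq2 : R,
    stable fpd fps fsd pa pq1 lp ls ->
    stable fpd fps fsd pa pq2 lp ls ->
    pq1 < pq2 ->
    Dp fpd fps fsd pa pq1 lp < Dp fpd fps fsd pa pq2 lp /\
    Ds fpd fps fsd pa pq2 lp ls < Ds fpd fps fsd pa pq1 lp ls.
Proof.
  intros Hfpd Hfps Hfsd Hlt Hlp Hls Hpa pq1 pq2 [Hq1 [S1 T1]] [Hq2 [S2 T2]] H12.
  unfold Dp, Ds. cbv zeta.
  set (a := a_ pa fpd fps) in *.
  set (mu := mu_p pa fpd fps) in *.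
  assert (Ha : 0 < a).
  { unfold a, a_. apply Rmult_lt_0_compat; [apply Rmult_lt_0_compat|]; lra. }
  assert (Hmu : mu = fpd + a) by reflexivity.
  assert (Hpf : pa * fps < 1) by nra.
  assert (Hmu1 : mu < 1).
  { rewrite Hmu. unfold a, a_. nra. }
  assert (Hmu0 : 0 < mu) by lra.
  set (q1 := fsd * (1 - pq1)) in *.
  set (q2 := fsd * (1 - pq2)) in *.
  assert (Hq1p : 0 < q1) by (unfold q1; nra).
  assert (Hq2p : 0 < q2) by (unfold q2; nra).
  assert (Hq12 : q2 < q1) by (unfold q1, q2; nra).
  assert (D1 : lp * (q1 + a) < q1 * mu).
  { replace (q1 * mu) with (q1 * mu / (q1 + a) * (q1 + a)) by (field; lra).
    apply Rmult_lt_compat_r; lra. }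
  assert (D2 : lp * (q2 + a) < q2 * mu).
  { replace (q2 * mu) with (q2 * mu / (q2 + a) * (q2 + a)) by (field; lra).
    apply Rmult_lt_compat_r; lra. }
  assert (Hxm : lp < mu) by nra.
  set (r1 := pq1 * fsd) in *.
  set (r2 := pq2 * fsd) in *.
  assert (Hr12 : r1 < r2) by (unfold r1, r2; nra).
  assert (C1 : ls * mu < r1 * (mu - lp)).
  { replace (r1 * (mu - lp)) with (r1 * (1 - lp / mu) * mu) by (field; lra).
    apply Rmult_lt_compat_r; lra. }
  assert (C2 : ls * mu < r2 * (mu - lp)).
  { replace (r2 * (mu - lp)) with (r2 * (1 - lp / mu) * mu) by (field; lra).
    apply Rmult_lt_compat_r; lra. }
  split.
  - apply div_lt_r; [lra|]. apply Rplus_lt_compat_l.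
    replace ((1 - pq1) * fsd) with q1 by (unfold q1; ring).
    replace ((1 - pq2) * fsd) with q2 by (unfold q2; ring).
    replace (-2 * (1 - pq1) * fsd) with (-2 * q1) by (unfold q1; ring).
    replace (-2 * (1 - pq2) * fsd) with (-2 * q2) by (unfold q2; ring).
    assert (Pd1 : 0 < (mu - lp) * (q1 * (mu - lp) - a * lp)) by (apply Rmult_lt_0_compat; nra).
    assert (Pd2 : 0 < (mu - lp) * (q2 * (mu - lp) - a * lp)) by (apply Rmult_lt_0_compat; nra).
    apply frac_lt.
    + replace ((q1 + a) * lp ^ 2 + mu * (- 2 * q1 - a) * lp + q1 * mu ^ 2)
        with ((mu - lp) * (q1 * (mu - lp) - a * lp)) by ring.
      replace ((q2 + a) * lp ^ 2 + mu * (- 2 * q2 - a) * lp + q2 * mu ^ 2)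
        with ((mu - lp) * (q2 * (mu - lp) - a * lp)) by ring.
      apply Rmult_lt_0_compat; lra.
    + set (K := a * lp ^ 2 * (1 - mu) + (mu ^ 2 - lp * (fpd + a * mu)) * (mu - lp)).
      assert (HK : 0 < K).
      { unfold K. assert (fpd + a * mu < mu) by (rewrite Hmu; nra).
        assert (0 < mu ^ 2 - lp * (fpd + a * mu)) by nra.
        assert (0 < a * lp ^ 2 * (1 - mu)).
        { apply Rmult_lt_0_compat; [|lra]. apply Rmult_lt_0_compat; [lra|]. simpl. nra. }
        nra. }
      match goal with |- ?L < ?R =>
        assert (E : R - L = a * lp * (mu - lp) * (q1 - q2) * K / mu) end.
      { unfold K. rewrite Hmu. field. lra. }
      assert (0 < a * lp * (mu - lp) * (q1 - q2) * K / mu).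
      { unfold Rdiv. apply Rmult_lt_0_compat; [|apply Rinv_0_lt_compat; lra].
        repeat apply Rmult_lt_0_compat; lra. }
      lra.
  - apply div_lt_r; [lra|].
    set (B := mu - lp).
    assert (HB : 0 < B) by (unfold B; lra).
    assert (HC1 : (ls - r1) * mu + r1 * lp < 0) by nra.
    assert (HC2 : (ls - r2) * mu + r2 * lp < 0) by nra.
    apply frac_lt.
    + assert (0 < B * ((ls - r2) * mu + r2 * lp) * (B * ((ls - r1) * mu + r1 * lp))).
      { replace (B * ((ls - r2) * mu + r2 * lp) * (B * ((ls - r1) * mu + r1 * lp)))
          with ((B * B) * (((ls - r2) * mu + r2 * lp) * ((ls - r1) * mu + r1 * lp))) by ring.
        apply Rmult_lt_0_compat; nra. }
      lra.
    + match goal with |- ?L < ?R =>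
        assert (E : R - L = B * ls * (r2 - r1) * (lp * (1 - mu) * (ls * mu) + (1 - ls) * B * mu * B)) end.
      { unfold B. ring. }
      assert (0 < B * ls * (r2 - r1) * (lp * (1 - mu) * (ls * mu) + (1 - ls) * B * mu * B)).
      { repeat apply Rmult_lt_0_compat; try lra.
        assert (0 < lp * (1 - mu) * (ls * mu)) by (repeat apply Rmult_lt_0_compat; lra).
        assert (0 < (1 - ls) * B * mu * B) by (repeat apply Rmult_lt_0_compat; lra).
        lra. }
      lra.
Qed.
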